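(* Let $\{M_i\}_i\subseteq\mathbb C^{d_1\times d_1}$ be a finite family of matrices and let $\{N_i\}_i\subseteq\mathbb C^{d_2\times d_2}$ be Hermitian matrices (indexed by the same index set) satisfying $N_i^2=I_{d_2}$ and $\mathrm{Tr}[N_iN_j]=d_2\,\delta_{i,j}$. Then the operator $T=\sum_i M_i\otimes N_i$ satisfies $\|T\|\ge\|M_i\|$ for every $i$.
   Context: $\|\cdot\|$ denotes the operator norm and $\delta_{i,j}$ the Kronecker delta. *)

(* Defs.v *)
From HB Require Import structures.
From mathcomp Require Import all_boot all_order all_algebra.
From mathcomp Require Import classical_sets reals.
From mathcomp Require Export complex mxtens.
Set Implicit Arguments. Unset Strict Implicit. Unset Printing Implicit Defensive.
Import Order.TTheory GRing.Theory Num.Theory.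
Local Open Scope ring_scope.
Local Open Scope classical_set_scope.

Definition vnorm (R : realType) (n : nat) (v : 'cV[R[i]]_n) : R :=
  Num.sqrt (\sum_(k < n) ((complex.Re (v k 0)) ^+ 2 + (complex.Im (v k 0)) ^+ 2)).

Definition opnorm (R : realType) (m n : nat) (A : 'M[R[i]]_(m, n)) : R :=
  sup [set vnorm (A *m v) | v in [set v : 'cV[R[i]]_n | vnorm v <= 1]].

Definition adjmx (R : realType) (m n : nat) (A : 'M[R[i]]_(m, n)) : 'M[R[i]]_(n, m) :=
  (map_mx (@conjc R) A)^T.

Definition is_hermitian (R : realType) (n : nat) (A : 'M[R[i]]_n) : Prop :=
  adjmx A = A.

(* Main.v *)
Require Import Defs.
From HB Require Import structures.
From mathcomp Require Import all_boot all_order all_algebra.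
From mathcomp Require Import classical_sets reals.
From mathcomp Require Import complex mxtens.
From mathcomp Require Import ring lra.
Import Order.TTheory GRing.Theory Num.Theory.
Local Open Scope ring_scope.

Section H.
Local Set Implicit Arguments.
Variable R : realType.
Lemma cauchy1 (I : finType) (a : I -> R) : (\sum_i a i) ^+ 2 <= #|I|%:R * \sum_i a i ^+ 2.
Proof.
set S := \sum_i a i; set S2 := \sum_i a i ^+ 2; set n : R := #|I|%:R.
have E1 i : \sum_j (a i - a j) ^+ 2 = n * a i ^+ 2 + S2 - 2 * a i * S.
  transitivity (\sum_j (a i ^+ 2 + a j ^+ 2) - \sum_j (2 * a i * a j)).
    by rewrite -sumrB; apply: eq_bigr => j _; ring.
  rewrite big_split /= sumr_const -mulr_natl -mulr_sumr /S /S2 /n; ring.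
have H : 0 <= \sum_i \sum_j (a i - a j) ^+ 2 by apply: sumr_ge0 => i _; apply: sumr_ge0 => j _; apply: sqr_ge0.
have E : \sum_i \sum_j (a i - a j) ^+ 2 = 2 * (n * S2) - 2 * S ^+ 2.
  under eq_bigr => i _ do rewrite E1.
  rewrite sumrB big_split /= -mulr_sumr -(mulr_suml _ _ (fun i => 2 * a i)) -mulr_sumr sumr_const -mulr_natl -/S -/S2 /n.
  rewrite -mulr_natl (_ : #|xpredT| = #|I|) //; ring.
rewrite E in H; lra.
Qed.
Definition sq (z : R[i]) : R := (complex.Re z) ^+ 2 + (complex.Im z) ^+ 2.

Lemma sq_ge0 z : 0 <= sq z.
Proof. by rewrite /sq addr_ge0 // sqr_ge0. Qed.

Lemma sqM a b : sq (a * b) = sq a * sq b.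
Proof. case: a => a1 a2; case: b => b1 b2; rewrite /sq /=. ring. Qed.

Lemma Re_sum (I : finType) (F : I -> R[i]) : complex.Re (\sum_i F i) = \sum_i complex.Re (F i).
Proof. exact: (raddf_sum (@complex.Re R : Rcomplex R -> R)). Qed.
Lemma Im_sum (I : finType) (F : I -> R[i]) : complex.Im (\sum_i F i) = \sum_i complex.Im (F i).
Proof. exact: (raddf_sum (@complex.Im R : Rcomplex R -> R)). Qed.

Lemma sq_sum (I : finType) (F : I -> R[i]) : sq (\sum_i F i) <= #|I|%:R * \sum_i sq (F i).
Proof.
rewrite /sq Re_sum Im_sum big_split /= mulrDr.
by apply: lerD; apply: cauchy1.
Qed.

Definition sn n (v : 'cV[R[i]]_n) : R := \sum_k sq (v k 0).
Lemma sn_ge0 n (v : 'cV[R[i]]_n) : 0 <= sn v.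
Proof. by apply: sumr_ge0 => k _; apply: sq_ge0. Qed.
Lemma vnormE n (v : 'cV[R[i]]_n) : vnorm v = Num.sqrt (sn v).
Proof. by []. Qed.

Lemma le_sum1 (J : finType) (F : J -> R) j : (forall j, 0 <= F j) -> F j <= \sum_j F j.
Proof. move=> h; rewrite (bigD1 j) //= lerDl; apply: sumr_ge0 => ? _; apply: h. Qed.

Lemma sq_le_sn n (v : 'cV[R[i]]_n) k : sq (v k 0) <= sn v.
Proof.
rewrite /sn (bigD1 k) //= lerDl; apply: sumr_ge0 => j _; apply: sq_ge0.
Qed.

Lemma vnorm_le1 n (v : 'cV[R[i]]_n) : vnorm v <= 1 -> sn v <= 1.
Proof.
rewrite vnormE => h; rewrite -(sqr_sqrtr (sn_ge0 v)) -[1](expr1n _ 2).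
by rewrite ler_pXn2r // ?nnegrE ?sqrtr_ge0.
Qed.

Lemma opnorm_bounded m n (A : 'M[R[i]]_(m, n)) :
  has_ubound [set vnorm (A *m v) | v in [set v : 'cV[R[i]]_n | vnorm v <= 1]].
Proof.
exists (Num.sqrt (\sum_i (n%:R * \sum_j sq (A i j)))).
move=> _ [v /= hv <-]; rewrite vnormE ler_sqrt; last first.
  apply: sumr_ge0 => i _; apply: mulr_ge0 => //; apply: sumr_ge0 => j _; apply: sq_ge0.
apply: ler_sum => i _; rewrite mxE.
apply: le_trans; first exact: sq_sum.
rewrite card_ord; apply: ler_wpM2l => //.
apply: ler_sum => j _; rewrite sqM; rewrite -[X in _ <= X]mulr1.
apply: ler_wpM2l; first exact: sq_ge0.
have h1 := sq_le_sn v j; have h2 := vnorm_le1 v hv. lra.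
Qed.

Lemma opnorm_ub m n (A : 'M[R[i]]_(m, n)) v : vnorm v <= 1 -> vnorm (A *m v) <= opnorm A.
Proof. by move=> hv; apply: ub_le_sup (opnorm_bounded A) _ _; exists v. Qed.

Lemma opnorm_le m n (A : 'M[R[i]]_(m, n)) c :
  (forall v, vnorm v <= 1 -> vnorm (A *m v) <= c) -> opnorm A <= c.
Proof.
move=> h; apply: ge_sup.
  exists (vnorm (A *m 0)), 0 => //=; rewrite vnormE /sn big1 ?sqrtr0 // => k _.
  by rewrite mxE /sq /= !expr2 !mulr0 addr0.
by move=> _ [v hv <-]; apply: h.
Qed.

Lemma sum_tens (V : nmodType) m n (F : 'I_(m * n) -> V) :
  \sum_k F k = \sum_i \sum_j F (mxtens_index (i, j)).
Proof.
rewrite pair_big /=; apply: (reindex (fun p : 'I_m * 'I_n => mxtens_index (p.1, p.2))) => /=.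
by exists (@mxtens_unindex m n)=> [[i j] _|i _]; rewrite ?mxtens_indexK ?mxtens_unindexK // -surjective_pairing mxtens_unindexK.
Qed.

Lemma sq_conj z : sq z = complex.Re (conjc z * z).
Proof. case: z => a b; rewrite /sq /=; ring. Qed.

Lemma sq_nat n (z : R[i]) : sq (n%:R * z) = n%:R ^+ 2 * sq z.
Proof.
rewrite sqM; congr (_ * _); rewrite -(rmorph_nat (@real_complex_def R (Phant R))) /sq /=.
by rewrite expr0n addr0.
Qed.

Lemma sn_le1 n (v : 'cV[R[i]]_n) : sn v <= 1 -> vnorm v <= 1.
Proof. by move=> h; rewrite vnormE -sqrtr1 ler_sqrt. Qed.

Lemma vnorm_ge0 n (v : 'cV[R[i]]_n) : 0 <= vnorm v.
Proof. by rewrite vnormE sqrtr_ge0. Qed.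

Lemma vnorm0 n : vnorm (0 : 'cV[R[i]]_n) = 0.
Proof.
rewrite vnormE /sn big1 ?sqrtr0 // => k _.
by rewrite mxE /sq /= !expr2 !mulr0 addr0.
Qed.

Lemma tens_colE m n (x : 'cV[R[i]]_m) (y : 'cV[R[i]]_n) a b :
  (x *t y : 'cV_(m * n)) (mxtens_index (a, b)) 0 = x a 0 * y b 0.
Proof.
rewrite /tensmx mxE mxtens_indexK /=.
have h1 (p : 'I_1) : p = 0 by apply: val_inj; case: p => [[]].
by rewrite [X in x a X]h1 [X in y b X]h1.
Qed.

Lemma sn_tens m n (x : 'cV[R[i]]_m) (y : 'cV[R[i]]_n) :
  sn (x *t y : 'cV_(m * n)) = sn x * sn y.
Proof.
have e0 : (0 : 'I_1) = mxtens_index (0 : 'I_1, 0 : 'I_1) :> 'I_(1 * 1) by apply: val_inj.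
rewrite /sn sum_tens mulr_suml; apply: eq_bigr => i _; rewrite mulr_sumr.
by apply: eq_bigr => j _; rewrite tens_colE sqM.
Qed.

End H.

Theorem lemma4p3 (R : realType) (I : finType) (d1 d2 : nat)
  (M : I -> 'M[R[i]]_d1) (N : I -> 'M[R[i]]_d2)
  (hd2 : (0 < d2)%N)
  (hherm : forall k, is_hermitian (N k))
  (hsq : forall k, N k *m N k = 1%:M)
  (htr : forall k l, \tr (N k *m N l) = if k == l then d2%:R else 0) :
  forall k, opnorm (M k) <= opnorm (\sum_(l : I) (M l *t N l)).
Proof.
move=> k; set T := \sum_(l : I) (M l *t N l); set c := opnorm T.
have c0 : 0 <= c.
  have h := opnorm_ub _ T (0 : 'cV_(d1 * d2)).
  apply: le_trans (h _); first exact: vnorm_ge0.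
  by rewrite vnorm0.
have e0 : (0 : 'I_1) = mxtens_index (0 : 'I_1, 0 : 'I_1) :> 'I_(1 * 1) by apply: val_inj.
have hcol j : @sn R _ (col j (N k)) = 1.
  have := congr1 (fun A : 'M_d2 => complex.Re (A j j)) (hsq k).
  rewrite /= !mxE eqxx /= => <-; rewrite /sn Re_sum; apply: eq_bigr => i _.
  rewrite mxE sq_conj; congr (complex.Re (_ * _)).
  have h := hherm k; rewrite /is_hermitian /adjmx in h.
  by rewrite -{2}h !mxE.
apply: (opnorm_le _ _) => x hx.
pose u j : 'cV[R[i]]_(d1 * d2) := x *t col j (N k).
have hu j : vnorm (u j) <= 1.
  by apply: sn_le1; rewrite /u sn_tens hcol mulr1; apply: (vnorm_le1 _ x).
pose w j := T *m u j.
have hw j : sn _ (w j) <= c ^+ 2.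
  have h1 := opnorm_ub _ T _ (hu j); have h2 := vnorm_ge0 _ (w j).
  rewrite -(sqr_sqrtr (sn_ge0 _ (w j))) -vnormE.
  by rewrite ler_pXn2r // nnegrE.
have key i : \sum_j w j (mxtens_index (i, j)) 0 = d2%:R * (M k *m x) i 0.
  have ent j l : ((M l *t N l) *m u j) (mxtens_index (i, j)) 0 = (M l *m x) i 0 * (N l *m N k) j j.
    rewrite mxE sum_tens !mxE mulr_suml; apply: eq_bigr => a _; rewrite mulr_sumr.
    apply: eq_bigr => b _; rewrite tensmxE /u tens_colE mxE.
    by rewrite -!mulrA; congr (_ * _); rewrite mulrCA.
  transitivity (\sum_j \sum_l (M l *m x) i 0 * (N l *m N k) j j).
    apply: eq_bigr => j _; rewrite /w /T mulmx_suml summxE; apply: eq_bigr => l _; exact: ent.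
  rewrite exchange_big.
  transitivity (\sum_l (M l *m x) i 0 * \tr (N l *m N k)).
    by apply: eq_bigr => l _; rewrite /mxtrace mulr_sumr.
  rewrite (bigD1 k) // htr eqxx big1; first by apply: etrans (addr0 _) _; exact: mulrC.
  by move=> l hl; rewrite htr (negbTE hl) mulr0.
have blk j : \sum_i sq _ (w j (mxtens_index (i, j)) 0) <= sn _ (w j).
  rewrite /sn sum_tens; apply: ler_sum => i _.
  apply: (@le_sum1 R _ (fun j' => sq _ (w j (mxtens_index (i, j')) 0)) j) => j'; exact: sq_ge0.
have hd : (0 : R) < d2%:R by rewrite ltr0n.
have main : d2%:R ^+ 2 * sn _ (M k *m x) <= d2%:R ^+ 2 * c ^+ 2.
  apply: le_trans (_ : d2%:R * \sum_j \sum_i sq _ (w j (mxtens_index (i, j)) 0) <= _).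
    rewrite /sn mulr_sumr exchange_big mulr_sumr; apply: ler_sum => i _.
    rewrite -sq_nat -key; apply: le_trans; first exact: sq_sum.
    by rewrite card_ord.
  rewrite expr2 -mulrA ler_wpM2l ?(ltW hd) //.
  apply: le_trans (_ : \sum_(j < d2) c ^+ 2 <= _).
    by apply: ler_sum => j _; apply: le_trans (blk j) (hw j).
  by rewrite sumr_const card_ord mulr_natl.
have hs : sn _ (M k *m x) <= c ^+ 2.
  by rewrite -(ler_pM2l (_ : 0 < d2%:R ^+ 2)) // exprn_gt0.
rewrite vnormE -[c](ger0_norm c0) -sqrtr_sqr ler_sqrt //; exact: sqr_ge0.
Qed.
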